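(* Let $G$ be a $K_4$-free circular-arc graph with $n = |V(G)| \geq 2$ vertices. Then $G$ has at most $2n$ edges.
   Context: A circular-arc graph is the intersection graph of a finite family of arcs of a circle. A graph is $K_4$-free if it contains no complete subgraph on $4$ vertices. *)

(* Defs.v *)
From mathcomp Require Import all_boot.
From Stdlib Require Import Reals ZArith.
Set Implicit Arguments. Unset Strict Implicit. Unset Printing Implicit Defensive.

(* The circle is R/Z, represented by Z-periodic subsets of R.
   A closed arc with start point [a] and (nonnegative) length [l] is the set of
   points x of the circle such that x + k lies in [a, a + l] for some integer k.
   (Length >= 1 gives the whole circle.) *)
Definition on_arc (a l x : R) : Prop :=
  exists k : Z, (a <= x + IZR k)%R /\ (x + IZR k <= a + l)%R.

Definition arcs_meet (a1 l1 a2 l2 : R) : Prop :=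
  exists x : R, on_arc a1 l1 x /\ on_arc a2 l2 x.

Definition simple_graph (T : finType) (e : rel T) : Prop :=
  symmetric e /\ irreflexive e.

Definition circular_arc_graph (T : finType) (e : rel T) : Prop :=
  exists (a l : T -> R), (forall v, (0 <= l v)%R) /\
    forall u v : T, u != v -> (e u v <-> arcs_meet (a u) (l u) (a v) (l v)).

Definition K4_free (T : finType) (e : rel T) : Prop :=
  ~ exists S : {set T}, #|S| = 4 /\
      forall u v, u \in S -> v \in S -> u != v -> e u v.

Definition edge_set (T : finType) (e : rel T) : {set {set T}} :=
  [set E : {set T} | [exists u, exists v, e u v && (E == [set u; v])]].

(* Main.v *)
Require Import Defs.
From mathcomp Require Import all_boot.
From Stdlib Require Import Reals.
From Stdlib Require Import Lra ZArith ClassicalDescription.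

Lemma meet_start {a1 l1 a2 l2 : R} :
  arcs_meet a1 l1 a2 l2 -> on_arc a2 l2 a1 \/ on_arc a1 l1 a2.
Proof.
move=> [x [[k1 [H1 H2]] [k2 [H3 H4]]]].
destruct (Rle_dec a2 (a1 + IZR (k2 - k1))) as [Hc|Hc].
- left; exists (k2 - k1)%Z; rewrite minus_IZR in Hc *; split; lra.
- apply Rnot_le_lt in Hc; right; exists (k1 - k2)%Z; rewrite minus_IZR in Hc; rewrite minus_IZR; split; lra.
Qed.

Lemma on_arc_self (a l : R) : (0 <= l)%R -> on_arc a l a.
Proof. move=> Hl; exists 0%Z; simpl; split; lra. Qed.

Lemma sub_card (T : finType) k : forall n (A : {set T}), #|A| = n + k ->
  exists B : {set T}, B \subset A /\ #|B| = k.
Proof.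
elim=> [|n IH] A HA.
  by exists A; split.
have : 0 < #|A| by rewrite HA.
move/card_gt0P=> [x Hx].
have [B [HB1 HB2]] : exists B : {set T}, B \subset A :\ x /\ #|B| = k.
  apply: IH; move: HA; rewrite (cardsD1 x A) Hx addSn add1n => -[] //.
exists B; split=> //; apply: subset_trans HB1 _; exact: subsetDl.
Qed.

Lemma card_bigcup_le (T I : finType) (F : I -> {set T}) :
  #|\bigcup_(i : I) F i| <= \sum_(i : I) #|F i|.
Proof.
elim/big_rec2: _ => [|i s U _ H]; first by rewrite cards0.
apply: leq_trans (leq_card_setU _ _) _; exact: leq_add.
Qed.

Theorem lemma2 (T : finType) (e : rel T) :
  simple_graph e -> circular_arc_graph e -> K4_free e -> 2 <= #|T| ->
  #|edge_set e| <= 2 * #|T|.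
Proof.
move=> [Hsym Hirr] [a [l [Hl Hcag]]] HK4 _.
pose P (u v : T) : bool :=
  if excluded_middle_informative (on_arc (a v) (l v) (a u)) then true else false.
have PP : forall u v, P u v -> on_arc (a v) (l v) (a u).
  by move=> u v; rewrite /P; case: excluded_middle_informative.
have PP' : forall u v, on_arc (a v) (l v) (a u) -> P u v.
  by move=> u v H; rewrite /P; case: excluded_middle_informative.
pose N u := [set v | e u v && P u v].
pose F u := [set [set u; v] | v in N u].
have HN : forall u, #|N u| <= 2.
  move=> u; rewrite leqNgt; apply/negP => H3.
  have uN : u \notin N u by rewrite inE Hirr.
  have H4 : 4 <= #|u |: N u| by rewrite cardsU1 uN.
  have [S [HS1 HS2]] := @sub_card T 4 (#|u |: N u| - 4) (u |: N u)
    (esym (subnK H4)).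
  apply: HK4; exists S; split=> // x y Hx Hy Hxy.
  have Hc : forall z, z \in S -> on_arc (a z) (l z) (a u).
    move=> z /(subsetP HS1); rewrite in_setU1 => /orP [/eqP -> |].
      exact: on_arc_self.
    by rewrite inE => /andP [_ /PP].
  apply/(Hcag _ _ Hxy); exists (a u); split; exact: Hc.
have Hsub : edge_set e \subset \bigcup_(u : T) F u.
  apply/subsetP => E; rewrite inE => /existsP [x /existsP [y /andP [Hxy /eqP ->]]].
  have Hne : x != y by apply/negP => /eqP Hq; rewrite Hq Hirr in Hxy.
  have [H|H] := meet_start (a1:=a x) (proj1 (Hcag _ _ Hne) Hxy).
    apply/bigcupP; exists x => //; apply/imsetP; exists y => //.
    by rewrite inE Hxy PP'.
  apply/bigcupP; exists y => //; apply/imsetP; exists x.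
    by rewrite inE Hsym Hxy PP'.
  by rewrite setUC.
apply: leq_trans (subset_leq_card Hsub) _.
have Hb := card_bigcup_le _ _ F. apply: (leq_trans Hb).
rewrite -sum1_card big_distrr /=.
apply: leq_sum => u _; rewrite muln1.
exact: leq_trans (leq_imset_card _ _) (HN u).
Qed.
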